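(* Let $m,n\ge 2$ be integers. Then $IDI(P_m\square P_n)=2$ if $(m,n)\neq(2,2)$, and $IDI(P_2\square P_2)=3$.
   Context: $P_k$ is the path on $k$ vertices and $\square$ the Cartesian product, so $P_m\square P_n$ is the $m\times n$ grid. For a finite simple connected graph $G=(V,E)$ with diameter $d$, a rank assignment is a function $f:V\to\mathbb{R}$; under $f$, the string of a vertex $v$ is the $d$-vector whose $i$-th coordinate is the sum of $f(w)$ over all vertices $w$ with $d(v,w)=i$. The ID-index $IDI(G)$ is the minimum $k$ such that there exists $f:V\to\mathbb{R}$ with $|f(V)|=k$ under which all vertices have distinct strings. *)

(* Defs.v *)
From HB Require Import structures.
From mathcomp Require Import all_boot all_order all_algebra.
From mathcomp Require Import reals.
Set Implicit Arguments. Unset Strict Implicit. Unset Printing Implicit Defensive.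
Import Order.TTheory GRing.Theory Num.Theory.
Local Open Scope ring_scope.

Definition path_graph (k : nat) : rel 'I_k :=
  fun i j => (i.+1 == j :> nat) || (j.+1 == i :> nat).

Definition cart_prod (T1 T2 : finType) (e1 : rel T1) (e2 : rel T2) : rel (T1 * T2) :=
  fun x y => ((x.1 == y.1) && e2 x.2 y.2) || ((x.2 == y.2) && e1 x.1 y.1).

Definition grid (m n : nat) : rel ('I_m * 'I_n) :=
  @cart_prod _ _ (@path_graph m) (@path_graph n).

Fixpoint ball (T : finType) (e : rel T) (k : nat) (x : T) : {set T} :=
  match k with
  | 0 => [set x]
  | k.+1 => ball e k x :|: [set y | [exists z in ball e k x, e z y]]
  end.

(* Graph distance: least k with y within k steps of x
   (for connected graphs this is < #|T|). *)
Definition gdist (T : finType) (e : rel T) (x y : T) : nat :=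
  find (fun k => y \in ball e k x) (iota 0 #|T|).

Definition diam (T : finType) (e : rel T) : nat :=
  \max_(v : T) \max_(w : T) gdist e v w.

Definition vstring (R : realType) (T : finType) (e : rel T) (f : T -> R) (v : T)
  : {ffun 'I_(diam e) -> R} :=
  [ffun i : 'I_(diam e) => \sum_(w : T | gdist e v w == i.+1) f w].

Definition nvals (R : realType) (T : finType) (f : T -> R) : nat :=
  size (undup [seq f v | v <- enum T]).

Definition id_assignment (R : realType) (T : finType) (e : rel T) (f : T -> R) : Prop :=
  injective (vstring e f).

Definition is_IDI (R : realType) {T : finType} (e : rel T) (k : nat) : Prop :=
  (exists f : T -> R, id_assignment e f /\ nvals f = k) /\
  (forall f : T -> R, id_assignment e f -> (k <= nvals f)%N).

(* Main.v *)
Require Import Defs.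
From HB Require Import structures.
From mathcomp Require Import all_boot all_order all_algebra.
From mathcomp Require Import reals.
From mathcomp Require Import zify.
Set Implicit Arguments. Unset Strict Implicit. Unset Printing Implicit Defensive.
Import Order.TTheory GRing.Theory Num.Theory.

Definition absd (x y : nat) := ((x - y) + (y - x))%N.
Definition md m n (x y : 'I_m * 'I_n) := (absd x.1 y.1 + absd x.2 y.2)%N.
Ltac fixeq := repeat match goal with H : @eq (Equality.sort _) ?a ?b |- _ => change (@eq nat a b) in H end.

Lemma grid_md m n (x y : 'I_m * 'I_n) : grid x y -> md x y = 1%N.
Proof.
case: x y => [a b] [c d]; rewrite /grid /cart_prod /path_graph /md /absd /=.
case/orP => /andP [/eqP -> /orP [/eqP H|/eqP H]]; fixeq; lia.
Qed.

Lemma md0 m n (x y : 'I_m * 'I_n) : md x y = 0%N -> x = y.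
Proof.
case: x y => [a b] [c d]; rewrite /md /absd /= => H.
have E1 : a = c by apply: val_inj => /=; lia.
have E2 : b = d by apply: val_inj => /=; lia.
by rewrite E1 E2.
Qed.

Lemma step_toward m (a b : 'I_m) : a != b ->
  exists c : 'I_m, (absd a c).+1 = absd a b /\ path_graph c b.
Proof.
move=> ne; case: (ltngtP a b) => H.
- have Hc : (b.-1 < m)%N by have := ltn_ord b; lia.
  exists (Ordinal Hc); rewrite /absd /path_graph /=; split; first lia.
  apply/orP; left; apply/eqP; lia.
- have Hc : (b.+1 < m)%N by have := ltn_ord a; lia.
  exists (Ordinal Hc); rewrite /absd /path_graph /=; split; first lia.
  by apply/orP; right.
- by move: ne; rewrite (val_inj H) eqxx.
Qed.

Lemma ball_md m n k (x y : 'I_m * 'I_n) : (y \in ball (@grid m n) k x) = (md x y <= k)%N.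
Proof.
elim: k y => [|k IH] y /=.
  rewrite in_set1; apply/eqP/idP => [->|H]; first by rewrite /md /absd; lia.
  by apply/esym/md0; lia.
rewrite in_setU IH in_set; apply/orP/idP.
  case=> [H|/existsP [z /andP [Hz Hzy]]]; first lia.
  rewrite IH in Hz; have := grid_md Hzy; move: Hz; rewrite /md /absd; lia.
move=> H; case: (leqP (md x y) k) => Hk; first by left.
right; apply/existsP.
have md1 : md x y = k.+1 by lia.
move: IH md1 {H Hk}; case: x y => [a b] [c d] IH; rewrite /md /= => md1.
case: (eqVneq a c) => E1.
- have E2 : b != d.
    apply/negP => /eqP E2; move: md1; rewrite /absd E1 E2; lia.
  have [e [He Hep]] := step_toward E2.
  exists (c, e); apply/andP; split.
    by rewrite IH /md /=; move: md1 He; rewrite /absd /= E1; lia.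
  by rewrite /grid /cart_prod /= eqxx Hep.
- have [e [He Hep]] := step_toward E1.
  exists (e, d); apply/andP; split.
    by rewrite IH /md /=; move: md1 He; rewrite /absd /=; lia.
  by rewrite /grid /cart_prod /= eqxx Hep orbT.
Qed.

Lemma find_iota_le d a N : (a <= d < a + N)%N -> find (fun k => d <= k)%N (iota a N) = (d - a)%N.
Proof.
elim: N a => [|N IH] a H; first lia.
rewrite /= ; case: (leqP d a) => H1; first lia.
rewrite IH; lia.
Qed.

Lemma md_lt m n (x y : 'I_m * 'I_n) : (md x y < m * n)%N.
Proof.
case: x y => [a b] [c d]; rewrite /md /absd /=.
have := ltn_ord a; have := ltn_ord b; have := ltn_ord c; have := ltn_ord d. nia.
Qed.

Lemma gdist_md m n (x y : 'I_m * 'I_n) : gdist (@grid m n) x y = md x y.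
Proof.
rewrite /gdist (eq_find (fun k => ball_md k x y)) card_prod !card_ord.
rewrite find_iota_le ?subn0 //; have := md_lt x y; lia.
Qed.

Lemma md_le_diam m n (x y : 'I_m * 'I_n) : (md x y <= diam (@grid m n))%N.
Proof.
rewrite -gdist_md /diam.
have H1 := @leq_bigmax _ (fun w => gdist (@grid m n) x w) y.
have H2 := @leq_bigmax _ (fun v => \max_w gdist (@grid m n) v w) x.
exact: leq_trans H1 H2.
Qed.

Lemma vstringE (R : realType) m n (g : 'I_m * 'I_n -> nat) v (i : 'I_(diam (@grid m n))) :
  vstring (@grid m n) (fun w => (g w)%:R%R : R) v i = (\sum_(w | md v w == i.+1) g w)%:R%R.
Proof.
rewrite ffunE natr_sum; apply: eq_bigl => w; by rewrite gdist_md.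
Qed.

Lemma vstring_cnt (R : realType) m n (g : 'I_m * 'I_n -> nat) v v' :
  vstring (@grid m n) (fun w => (g w)%:R%R : R) v = vstring (@grid m n) (fun w => (g w)%:R%R : R) v' ->
  forall k, (0 < k)%N -> \sum_(w | md v w == k) g w = \sum_(w | md v' w == k) g w.
Proof.
move=> E k k0.
case: (leqP k (diam (@grid m n))) => Hk.
- have Hi : (k.-1 < diam (@grid m n))%N by lia.
  have := congr1 (fun F : {ffun 'I_(diam (@grid m n)) -> R} => F (Ordinal Hi)) E; rewrite !vstringE /=.
  have -> : k.-1.+1 = k by lia.
  by move/eqP; rewrite eqr_nat => /eqP.
- rewrite !big_pred0 // => w; apply/negP => /eqP E1; fixeq;
  match goal with E1 : md ?a ?b = _ |- _ => have := md_le_diam a b end; lia.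
Qed.

Lemma sum3 (T : finType) (p1 p2 p3 : T) (P : pred T) :
  p1 != p2 -> p1 != p3 -> p2 != p3 ->
  (\sum_(w | P w) (w \in [set p1; p2; p3]) = P p1 + P p2 + P p3)%N.
Proof.
move=> n12 n13 n23.
rewrite big_mkcond /=.
rewrite (eq_bigr (fun w => if w \in [set p1; p2; p3] then (P w : nat) else 0%N)); last first.
  by move=> w _; case: (P w); case: (w \in _).
rewrite -big_mkcond /=.
have -> : [set p1; p2; p3] = p1 |: (p2 |: [set p3]) by apply/setP => x; rewrite !inE ?orbA.
rewrite big_setU1 /=; last by rewrite !inE negb_or n12 n13.
rewrite big_setU1 /=; last by rewrite !inE n23.
by rewrite big_set1 addnA.
Qed.

Definition cnt3 m n (p1 p2 p3 v : 'I_m * 'I_n) k :=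
  ((md v p1 == k) + (md v p2 == k) + (md v p3 == k))%N.

Lemma pattern_id (R : realType) m n (p1 p2 p3 : 'I_m * 'I_n) :
  p1 != p2 -> p1 != p3 -> p2 != p3 ->
  (forall v v', (forall k, (0 < k)%N -> cnt3 p1 p2 p3 v k = cnt3 p1 p2 p3 v' k) -> v = v') ->
  id_assignment (@grid m n) (fun w => ((w \in [set p1; p2; p3]) : nat)%:R%R : R).
Proof.
move=> n12 n13 n23 dec v v' E; apply: dec => k k0.
have := vstring_cnt E k0.
by rewrite (sum3 (fun w => md v w == k)) // (sum3 (fun w => md v' w == k)).
Qed.

Lemma sumk x K : (x < K)%N -> (\sum_(k < K) k * (x == k))%N = x.
Proof.
move=> xK; rewrite (bigD1 (Ordinal xK)) //= eqxx muln1 big1 ?addn0 // => k Hk.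
have -> : (x == k) = false.
  apply/negP => /eqP E; move: Hk; rewrite -val_eqE /= E eqxx //.
by rewrite muln0.
Qed.

Lemma cnt3_sum m n (p1 p2 p3 v : 'I_m * 'I_n) :
  (\sum_(k < m * n) k * cnt3 p1 p2 p3 v k = md v p1 + md v p2 + md v p3)%N.
Proof.
rewrite /cnt3; under eq_bigr => k _ do rewrite !mulnDr.
by rewrite !big_split /= !sumk // md_lt.
Qed.

Lemma cnt3_eq_sum m n (p1 p2 p3 v v' : 'I_m * 'I_n) :
  (forall k, (0 < k)%N -> cnt3 p1 p2 p3 v k = cnt3 p1 p2 p3 v' k) ->
  (md v p1 + md v p2 + md v p3 = md v' p1 + md v' p2 + md v' p3)%N.
Proof.
move=> H; rewrite -!cnt3_sum; apply: eq_bigr => [[[|k] Hk]] _ //=.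
by rewrite H.
Qed.

Lemma cnt3_mem m n (p1 p2 p3 v v' : 'I_m * 'I_n) c :
  (forall k, (0 < k)%N -> cnt3 p1 p2 p3 v k = cnt3 p1 p2 p3 v' k) ->
  (0 < c)%N -> (md v p1 = c \/ md v p2 = c \/ md v p3 = c) ->
  (md v' p1 = c \/ md v' p2 = c \/ md v' p3 = c).
Proof.
move=> H c0 Hc.
have : (0 < cnt3 p1 p2 p3 v' c)%N.
  rewrite -H // /cnt3; case: Hc => [->|[->|->]]; rewrite eqxx; lia.
rewrite /cnt3; case: eqP => [?|_]; first by left.
case: eqP => [?|_]; first by right; left.
case: eqP => [?|_]; first by right; right.
by [].
Qed.

Lemma pair_eq_nat m n (x y : 'I_m * 'I_n) :
  (x.1 : nat) = y.1 -> (x.2 : nat) = y.2 -> x = y.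
Proof.
case: x y => [a b] [c d] /= E1 E2.
by rewrite (val_inj E1) (val_inj E2).
Qed.

Lemma core (n i j i' j' a b c a' b' c' : nat) :
  a = (i + j)%N -> a' = (i' + j')%N ->
  ((exists p, n = (j + p + 2)%N /\ b = (i + p)%N /\ c = (i + p + 1)%N) \/ (n = (j + 1)%N /\ b = (i + 1)%N /\ c = i)) ->
  ((exists p, n = (j' + p + 2)%N /\ b' = (i' + p)%N /\ c' = (i' + p + 1)%N) \/ (n = (j' + 1)%N /\ b' = (i' + 1)%N /\ c' = i')) ->
  (4 <= n)%N ->
  (a + b + c = a' + b' + c')%N ->
  ((0 < c)%N -> c = a' \/ c = b' \/ c = c') ->
  ((0 < c')%N -> c' = a \/ c' = b \/ c' = c) ->
  i = i' /\ j = j'.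
Proof.
move=> -> ->.
intros [[p [E1 [-> ->]]]|[E1 [-> ->]]] [[q [E2 [-> ->]]]|[E2 [-> ->]]] Hn Hs H1 H2;
  repeat match goal with
  | H : is_true (0 < ?c)%N -> _ \/ _ \/ _ |- _ =>
     let E := fresh in case: (posnP c) => E;
     [clear H | case: (H E) => [?|[?|?]]; clear H]
  end; lia.
Qed.

Lemma typeAB (n i j : nat) : (4 <= n)%N -> (j < n)%N ->
  (exists p, n = (j + p + 2)%N /\ (i + absd j (n-2))%N = (i + p)%N /\ (i + absd j (n-1))%N = (i + p + 1)%N) \/
  (n = (j + 1)%N /\ (i + absd j (n-2))%N = (i + 1)%N /\ (i + absd j (n-1))%N = i).
Proof.
move=> Hn Hj; rewrite /absd; case: (leqP j (n-2)) => H.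
  left; exists (n - 2 - j)%N; lia.
right; lia.
Qed.

Lemma absd0 x : absd x 0 = x.
Proof. by rewrite /absd subn0 sub0n addn0. Qed.

Lemma cnt3_sym m n (p1 p2 p3 v v' : 'I_m * 'I_n) :
  (forall k, (0 < k)%N -> cnt3 p1 p2 p3 v k = cnt3 p1 p2 p3 v' k) ->
  (forall k, (0 < k)%N -> cnt3 p1 p2 p3 v' k = cnt3 p1 p2 p3 v k).
Proof. by move=> H k k0; rewrite H. Qed.

Lemma decA m n (h0m : (0 < m)%N) (h0n : (0 < n)%N) (h2 : (n-2 < n)%N) (h1 : (n-1 < n)%N) :
  (4 <= n)%N -> forall v v',
  (forall k, (0 < k)%N -> cnt3 (Ordinal h0m, Ordinal h0n) (Ordinal h0m, Ordinal h2) (Ordinal h0m, Ordinal h1) v k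
     = cnt3 (Ordinal h0m, Ordinal h0n) (Ordinal h0m, Ordinal h2) (Ordinal h0m, Ordinal h1) v' k) -> v = v'.
Proof.
move=> Hn v v' H.
have Hs := cnt3_eq_sum H.
have H1 := fun c0 => cnt3_mem H c0 (or_intror (or_intror erefl)).
have H2 := fun c0 => cnt3_mem (cnt3_sym H) c0 (or_intror (or_intror erefl)).
move: Hs H1 H2 {H}; case: v v' => [i j] [i' j']; rewrite /md /= !absd0 => Hs H1 H2.
suff [E1 E2] : (i : nat) = i' /\ (j : nat) = j' by apply: pair_eq_nat.
apply: (core (n:=n) (i:=i) (j:=j) (i':=i') (j':=j') (a := (i + absd j 0)%N) (a' := (i' + absd j' 0)%N)
  (b := (i + absd j (n-2))%N) (c := (i + absd j (n-1))%N)
  (b' := (i' + absd j' (n-2))%N) (c' := (i' + absd j' (n-1))%N)).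
- by rewrite absd0.
- by rewrite absd0.
- exact: typeAB.
- exact: typeAB.
- done.
- move: Hs; rewrite !absd0; lia.
- move=> c0; case: (H1 ltac:(lia)) => [E|[E|E]]; [left|right;left|right;right]; rewrite ?absd0; lia.
- move=> c0; case: (H2 ltac:(lia)) => [E|[E|E]]; [left|right;left|right;right]; rewrite ?absd0; lia.
Qed.

Lemma decA' m n (h0m : (0 < m)%N) (h0n : (0 < n)%N) (h2 : (m-2 < m)%N) (h1 : (m-1 < m)%N) :
  (4 <= m)%N -> forall v v',
  (forall k, (0 < k)%N -> cnt3 (Ordinal h0m, Ordinal h0n) (Ordinal h2, Ordinal h0n) (Ordinal h1, Ordinal h0n) v k
     = cnt3 (Ordinal h0m, Ordinal h0n) (Ordinal h2, Ordinal h0n) (Ordinal h1, Ordinal h0n) v' k) -> v = v'.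
Proof.
move=> Hn v v' H.
have Hs := cnt3_eq_sum H.
have H1 := fun c0 => cnt3_mem H c0 (or_intror (or_intror erefl)).
have H2 := fun c0 => cnt3_mem (cnt3_sym H) c0 (or_intror (or_intror erefl)).
move: Hs H1 H2 {H}; case: v v' => [i j] [i' j']; rewrite /md /= !absd0 => Hs H1 H2.
suff [E2 E1] : (j : nat) = j' /\ (i : nat) = i' by apply: pair_eq_nat.
apply: (core (n:=m) (i:=j) (j:=i) (i':=j') (j':=i') (a := (absd i 0 + j)%N) (a' := (absd i' 0 + j')%N)
  (b := (j + absd i (m-2))%N) (c := (j + absd i (m-1))%N)
  (b' := (j' + absd i' (m-2))%N) (c' := (j' + absd i' (m-1))%N)).
- by rewrite absd0 addnC.
- by rewrite absd0 addnC.
- exact: typeAB.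
- exact: typeAB.
- done.
- move: Hs; rewrite !absd0; lia.
- move=> c0; case: (H1 ltac:(lia)) => [E|[E|E]]; [left|right;left|right;right]; rewrite ?absd0; lia.
- move=> c0; case: (H2 ltac:(lia)) => [E|[E|E]]; [left|right;left|right;right]; rewrite ?absd0; lia.
Qed.

Lemma vstringF (R : realType) m n (f : 'I_m * 'I_n -> R) v (i : 'I_(diam (@grid m n))) :
  vstring (@grid m n) f v i = (\sum_(w | md v w == i.+1) f w)%R.
Proof. rewrite ffunE; apply: eq_bigl => w; by rewrite gdist_md. Qed.

Lemma vstring_aut (R : realType) m n (f : 'I_m * 'I_n -> R) (s : 'I_m * 'I_n -> 'I_m * 'I_n) :
  injective s -> (forall x y, md (s x) (s y) = md x y) -> (forall w, f (s w) = f w) ->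
  forall v, vstring (@grid m n) f (s v) = vstring (@grid m n) f v.
Proof.
move=> si smd sf v; apply/ffunP => i; rewrite !vstringF.
rewrite (reindex_inj si) /=; apply: eq_big => w; [by rewrite smd | by rewrite sf].
Qed.

Lemma nvals_ind (R : realType) (T : finType) (S : {set T}) a b :
  a \in S -> b \notin S -> nvals (fun w => ((w \in S) : nat)%:R%R : R) = 2%N.
Proof.
move=> Ha Hb; rewrite /nvals.
set f := (fun w => ((w \in S) : nat)%:R%R : R).
have fab : f a != f b by rewrite /f Ha (negbTE Hb) eqr_nat.
have -> : size (undup [seq f v | v <- enum T]) = size [:: f a; f b].
  apply: perm_size; apply: uniq_perm; first exact: undup_uniq.
    by rewrite /= inE fab.
  move=> x; rewrite mem_undup !inE; apply/mapP/idP.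
    case=> w _ ->; case Hw: (w \in S).
      by rewrite /f Hw Ha eqxx.
    by rewrite /f Hw (negbTE Hb) eqxx orbT.
  case/orP => /eqP ->; [exists a|exists b]; by rewrite ?mem_enum.
by [].
Qed.

Lemma nvals_const (R : realType) (T : finType) (f : T -> R) :
  (nvals f <= 1)%N -> forall x y, f x = f y.
Proof.
rewrite /nvals => H x y.
have Hx : f x \in undup [seq f v | v <- enum T] by rewrite mem_undup; apply: map_f; rewrite mem_enum.
have Hy : f y \in undup [seq f v | v <- enum T] by rewrite mem_undup; apply: map_f; rewrite mem_enum.
move: H Hx Hy; case: (undup _) => [|z [|z' s]] //= _; rewrite !inE => /eqP -> /eqP -> //.
Qed.

Lemma nvals_ge3 (R : realType) (T : finType) (f : T -> R) a b c :
  f a != f b -> f a != f c -> f b != f c -> (3 <= nvals f)%N.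
Proof.
move=> ab ac bc; rewrite /nvals.
have -> : 3%N = size [:: f a; f b; f c] by [].
apply: uniq_leq_size; first by rewrite /= !inE negb_or ab ac bc.
move=> x; rewrite !inE mem_undup => /orP [/eqP ->|/orP [/eqP ->|/eqP ->]];
  apply: map_f; by rewrite mem_enum.
Qed.

Definition rr m n (x : 'I_m * 'I_n) := (rev_ord x.1, rev_ord x.2).

Lemma rr_inj m n : injective (@rr m n).
Proof. apply: (can_inj (g := @rr m n)) => [[a b]]; by rewrite /rr /= !rev_ordK. Qed.

Lemma rr_md m n (x y : 'I_m * 'I_n) : md (rr x) (rr y) = md x y.
Proof.
case: x y => [a b] [c d]; rewrite /rr /md /absd /=.
have := ltn_ord a; have := ltn_ord b; have := ltn_ord c; have := ltn_ord d; lia.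
Qed.

Lemma lower2 (R : realType) m n (hm : (2 <= m)%N) (hn : (2 <= n)%N) (f : 'I_m * 'I_n -> R) :
  id_assignment (@grid m n) f -> (2 <= nvals f)%N.
Proof.
move=> Hid; rewrite leqNgt; apply/negP => H1.
have Hc := nvals_const (f := f) ltac:(lia).
have h0m : (0 < m)%N by lia.
have h0n : (0 < n)%N by lia.
pose c := (Ordinal h0m, Ordinal h0n).
have := vstring_aut (f := f) (@rr_inj m n) (@rr_md m n) (fun w => Hc _ _) c.
move/Hid => /(congr1 (fun x => nat_of_ord x.1)) /=; lia.
Qed.

Definition o0 : 'I_2 := @ord0 1.
Definition o1 : 'I_2 := lift (@ord0 1) (@ord0 0).
Definition pA : 'I_2 * 'I_2 := (o0, o0).
Definition pB : 'I_2 * 'I_2 := (o0, o1).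
Definition pC : 'I_2 * 'I_2 := (o1, o0).
Definition pD : 'I_2 * 'I_2 := (o1, o1).

Lemma all22 (w : 'I_2 * 'I_2) : w = pA \/ w = pB \/ w = pC \/ w = pD.
Proof.
case: w => [[[|[|a]] Ha] [[|[|b]] Hb]] //;
  [left|right;left|right;right;left|right;right;right]; by apply: pair_eq_nat.
Qed.

Lemma sum22 (G : 'I_2 * 'I_2 -> nat) : (\sum_w G w = G pA + G pB + G pC + G pD)%N.
Proof.
rewrite (eq_bigr (fun w => G (w.1, w.2))); last by case.
rewrite -(pair_bigA _ (fun a b => G (a, b))) /= !big_ord_recl !big_ord0 /=.
by rewrite /pA /pB /pC /pD /o0 /o1 !addn0 !addnA.
Qed.

Definition tr2 (x : 'I_2 * 'I_2) := (x.2, x.1).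
Definition atr2 (x : 'I_2 * 'I_2) := (rev_ord x.2, rev_ord x.1).
Definition r1 m n (x : 'I_m * 'I_n) := (rev_ord x.1, x.2).
Definition r2 m n (x : 'I_m * 'I_n) := (x.1, rev_ord x.2).

Lemma tr2_inj : injective tr2.
Proof. by apply: (can_inj (g := tr2)) => [[a b]]. Qed.
Lemma atr2_inj : injective atr2.
Proof. apply: (can_inj (g := atr2)) => [[a b]]; by rewrite /atr2 /= !rev_ordK. Qed.
Lemma r1_inj m n : injective (@r1 m n).
Proof. apply: (can_inj (g := @r1 m n)) => [[a b]]; by rewrite /r1 /= !rev_ordK. Qed.
Lemma r2_inj m n : injective (@r2 m n).
Proof. apply: (can_inj (g := @r2 m n)) => [[a b]]; by rewrite /r2 /= !rev_ordK. Qed.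

Lemma tr2_md x y : md (tr2 x) (tr2 y) = md x y.
Proof. case: x y => [a b] [c d]; rewrite /tr2 /md /absd /=; lia. Qed.
Lemma atr2_md x y : md (atr2 x) (atr2 y) = md x y.
Proof.
case: x y => [a b] [c d]; rewrite /atr2 /md /absd /=.
have := ltn_ord a; have := ltn_ord b; have := ltn_ord c; have := ltn_ord d; lia.
Qed.
Lemma r1_md m n (x y : 'I_m * 'I_n) : md (r1 x) (r1 y) = md x y.
Proof.
case: x y => [a b] [c d]; rewrite /r1 /md /absd /=.
have := ltn_ord a; have := ltn_ord c; lia.
Qed.
Lemma r2_md m n (x y : 'I_m * 'I_n) : md (r2 x) (r2 y) = md x y.
Proof.
case: x y => [a b] [c d]; rewrite /r2 /md /absd /=.
have := ltn_ord b; have := ltn_ord d; lia.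
Qed.

Lemma lower22 (R : realType) (f : 'I_2 * 'I_2 -> R) :
  id_assignment (@grid 2 2) f -> (3 <= nvals f)%N.
Proof.
move=> Hid.
have nAD : f pA != f pD.
  apply/eqP => E.
  have := vstring_aut (f := f) atr2_inj atr2_md _ pA.
  have -> : atr2 pA = pD by apply: pair_eq_nat.
  move=> H; have /Hid : vstring (@grid 2 2) f pD = vstring (@grid 2 2) f pA.
    apply: H => w; case: (all22 w) => [->|[->|[->|->]]].
    - have -> : atr2 pA = pD by apply: pair_eq_nat. by [].
    - have -> : atr2 pB = pB by apply: pair_eq_nat. by [].
    - have -> : atr2 pC = pC by apply: pair_eq_nat. by [].
    - have -> : atr2 pD = pA by apply: pair_eq_nat. by [].
  by move/(congr1 (fun x => nat_of_ord x.1)).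
have nBC : f pB != f pC.
  apply/eqP => E.
  have := vstring_aut (f := f) tr2_inj tr2_md _ pB.
  have -> : tr2 pB = pC by apply: pair_eq_nat.
  move=> H; have /Hid : vstring (@grid 2 2) f pC = vstring (@grid 2 2) f pB.
    apply: H => w; case: (all22 w) => [->|[->|[->|->]]].
    - have -> : tr2 pA = pA by apply: pair_eq_nat. by [].
    - have -> : tr2 pB = pC by apply: pair_eq_nat. by [].
    - have -> : tr2 pC = pB by apply: pair_eq_nat. by [].
    - have -> : tr2 pD = pD by apply: pair_eq_nat. by [].
  by move/(congr1 (fun x => nat_of_ord x.1)).
rewrite leqNgt; apply/negP => H2.
have memB : f pB = f pA \/ f pB = f pD.
  case: (eqVneq (f pB) (f pA)) => [|h1]; first by left.
  case: (eqVneq (f pB) (f pD)) => [|h2]; first by right.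
  have := nvals_ge3 (a := pB) (b := pA) (c := pD) h1 h2 nAD; lia.
have memC : f pC = f pA \/ f pC = f pD.
  case: (eqVneq (f pC) (f pA)) => [|h1]; first by left.
  case: (eqVneq (f pC) (f pD)) => [|h2]; first by right.
  have := nvals_ge3 (a := pC) (b := pA) (c := pD) h1 h2 nAD; lia.
case: memB => EB.
- have EC : f pC = f pD.
    case: memC => // EC; by move: nBC; rewrite EB EC eqxx.
  have := vstring_aut (f := f) (@r2_inj 2 2) (@r2_md 2 2) _ pA.
  have -> : r2 pA = pB by apply: pair_eq_nat.
  move=> H; have /Hid : vstring (@grid 2 2) f pB = vstring (@grid 2 2) f pA.
    apply: H => w; case: (all22 w) => [->|[->|[->|->]]].
    - have -> : r2 pA = pB by apply: pair_eq_nat. by [].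
    - have -> : r2 pB = pA by apply: pair_eq_nat. by [].
    - have -> : r2 pC = pD by apply: pair_eq_nat. by [].
    - have -> : r2 pD = pC by apply: pair_eq_nat. by [].
  by move/(congr1 (fun x => nat_of_ord x.2)).
- have EC : f pC = f pA.
    case: memC => // EC; by move: nBC; rewrite EB EC eqxx.
  have := vstring_aut (f := f) (@r1_inj 2 2) (@r1_md 2 2) _ pA.
  have -> : r1 pA = pC by apply: pair_eq_nat.
  move=> H; have /Hid : vstring (@grid 2 2) f pC = vstring (@grid 2 2) f pA.
    apply: H => w; case: (all22 w) => [->|[->|[->|->]]].
    - have -> : r1 pA = pC by apply: pair_eq_nat. by [].
    - have -> : r1 pB = pD by apply: pair_eq_nat. by [].
    - have -> : r1 pC = pA by apply: pair_eq_nat. by [].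
    - have -> : r1 pD = pB by apply: pair_eq_nat. by [].
  by move/(congr1 (fun x => nat_of_ord x.1)).
Qed.

Definition g22 (w : 'I_2 * 'I_2) : nat := if w == pC then 2%N else if w == pD then 1%N else 0%N.

Lemma sum22c (P : pred ('I_2 * 'I_2)) (G : 'I_2 * 'I_2 -> nat) :
  (\sum_(w | P w) G w = (if P pA then G pA else 0) + (if P pB then G pB else 0)
     + (if P pC then G pC else 0) + (if P pD then G pD else 0))%N.
Proof. by rewrite big_mkcond sum22. Qed.

Lemma upper22_id (R : realType) : id_assignment (@grid 2 2) (fun w => (g22 w)%:R%R : R).
Proof.
move=> v v' E.
have H := vstring_cnt E.
have h1 := H 1%N isT; have h2 := H 2%N isT; clear H E.
move: h1 h2; rewrite !sum22c.
case: (all22 v) => [->|[->|[->|->]]]; case: (all22 v') => [->|[->|[->|->]]]; vm_compute; intros; congruence.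
Qed.

Lemma upper22_nvals (R : realType) : nvals (fun w => (g22 w)%:R%R : R) = 3%N.
Proof.
rewrite /nvals.
set f := (fun w => (g22 w)%:R%R : R).
have gA : g22 pA = 0%N by vm_compute.
have gB : g22 pB = 0%N by vm_compute.
have gC : g22 pC = 2%N by vm_compute.
have gD : g22 pD = 1%N by vm_compute.
set s := undup _.
have -> : size s = size [:: f pA; f pC; f pD].
  apply: perm_size; apply: uniq_perm; first exact: undup_uniq.
    by rewrite /= !inE /f gA gC gD !eqr_nat.
  move=> x; rewrite /s mem_undup !inE; apply/mapP/idP.
    case=> w _ ->; case: (all22 w) => [->|[->|[->|->]]]; rewrite /f ?gA ?gB ?gC ?gD eqxx ?orbT //.
  case/orP => [/eqP ->|/orP [/eqP ->|/eqP ->]]; [exists pA|exists pC|exists pD]; by rewrite ?mem_enum.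
by [].
Qed.

Lemma in3 (T : finType) (p1 p2 p3 : T) : p1 \in [set p1; p2; p3].
Proof. by rewrite !inE eqxx. Qed.

Lemma notin3 (T : finType) (x p1 p2 p3 : T) : x != p1 -> x != p2 -> x != p3 -> x \notin [set p1; p2; p3].
Proof. by move=> h1 h2 h3; rewrite !inE (negbTE h1) (negbTE h2) (negbTE h3). Qed.

Lemma neq1 m n (x y : 'I_m * 'I_n) : (x.1 : nat) != y.1 -> x != y.
Proof. by move=> H; apply/eqP => E; move: H; rewrite E eqxx. Qed.
Lemma neq2 m n (x y : 'I_m * 'I_n) : (x.2 : nat) != y.2 -> x != y.
Proof. by move=> H; apply/eqP => E; move: H; rewrite E eqxx. Qed.

Definition mk m n i j (hi : (i < m)%N) (hj : (j < n)%N) : 'I_m * 'I_n := (Ordinal hi, Ordinal hj).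

Lemma dec23 : forall v v' : 'I_2 * 'I_3,
  (forall k, (0 < k)%N -> cnt3 (@mk 2 3 0 0 isT isT) (@mk 2 3 0 2 isT isT) (@mk 2 3 1 0 isT isT) v k
     = cnt3 (@mk 2 3 0 0 isT isT) (@mk 2 3 0 2 isT isT) (@mk 2 3 1 0 isT isT) v' k) -> v = v'.
Proof.
move=> v v' H; move: (H 1%N isT) (H 2%N isT) (H 3%N isT) (H 4%N isT); clear H.
case: v v' => [[a Ha] [b Hb]] [[c Hc] [d Hd]] h1 h2 h3 h4.
suff [E1 E2] : a = c /\ b = d by apply: pair_eq_nat.
move: h1 h2 h3 h4.
case: a Ha => [|[|a]] // Ha; case: b Hb => [|[|[|b]]] // Hb;
case: c Hc => [|[|c]] // Hc; case: d Hd => [|[|[|d]]] // Hd; by vm_compute.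
Qed.
Lemma dec33 : forall v v' : 'I_3 * 'I_3,
  (forall k, (0 < k)%N -> cnt3 (@mk 3 3 0 0 isT isT) (@mk 3 3 0 2 isT isT) (@mk 3 3 1 0 isT isT) v k
     = cnt3 (@mk 3 3 0 0 isT isT) (@mk 3 3 0 2 isT isT) (@mk 3 3 1 0 isT isT) v' k) -> v = v'.
Proof.
move=> v v' H; move: (H 1%N isT) (H 2%N isT) (H 3%N isT) (H 4%N isT); clear H.
case: v v' => [[a Ha] [b Hb]] [[c Hc] [d Hd]] h1 h2 h3 h4.
suff [E1 E2] : a = c /\ b = d by apply: pair_eq_nat.
move: h1 h2 h3 h4.
case: a Ha => [|[|[|a]]] // Ha; case: b Hb => [|[|[|b]]] // Hb;
case: c Hc => [|[|[|c]]] // Hc; case: d Hd => [|[|[|d]]] // Hd; by vm_compute.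
Qed.
Lemma dec32 : forall v v' : 'I_3 * 'I_2,
  (forall k, (0 < k)%N -> cnt3 (@mk 3 2 0 0 isT isT) (@mk 3 2 2 0 isT isT) (@mk 3 2 0 1 isT isT) v k
     = cnt3 (@mk 3 2 0 0 isT isT) (@mk 3 2 2 0 isT isT) (@mk 3 2 0 1 isT isT) v' k) -> v = v'.
Proof.
move=> v v' H; move: (H 1%N isT) (H 2%N isT) (H 3%N isT) (H 4%N isT); clear H.
case: v v' => [[a Ha] [b Hb]] [[c Hc] [d Hd]] h1 h2 h3 h4.
suff [E1 E2] : a = c /\ b = d by apply: pair_eq_nat.
move: h1 h2 h3 h4.
case: a Ha => [|[|[|a]]] // Ha; case: b Hb => [|[|b]] // Hb;
case: c Hc => [|[|[|c]]] // Hc; case: d Hd => [|[|d]] // Hd; by vm_compute.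
Qed.

Lemma upper2 (R : realType) m n (hm : (2 <= m)%N) (hn : (2 <= n)%N) :
  ~~ ((m == 2) && (n == 2)) ->
  exists f : 'I_m * 'I_n -> R, id_assignment (@grid m n) f /\ nvals f = 2%N.
Proof.
move=> Hmn.
have h0m : (0 < m)%N by lia.
have h0n : (0 < n)%N by lia.
have h1m : (1 < m)%N by lia.
have h1n : (1 < n)%N by lia.
case: (leqP 4 n) => Hn.
  have h2 : (n-2 < n)%N by lia.
  have h1 : (n-1 < n)%N by lia.
  pose p1 := @mk m n 0 0 h0m h0n.
  pose p2 := @mk m n 0 (n-2) h0m h2.
  pose p3 := @mk m n 0 (n-1) h0m h1.
  exists (fun w => ((w \in [set p1; p2; p3]) : nat)%:R%R); split.
    apply: pattern_id; try (apply: neq2; rewrite /=; apply/eqP; lia).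
    exact: decA.
  apply: (@nvals_ind R _ _ (p1) (@mk m n 0 1 h0m h1n)); first exact: in3.
  by apply: notin3; apply: neq2; rewrite /=; apply/eqP; lia.
case: (leqP 4 m) => Hm.
  have h2 : (m-2 < m)%N by lia.
  have h1 : (m-1 < m)%N by lia.
  pose p1 := @mk m n 0 0 h0m h0n.
  pose p2 := @mk m n (m-2) 0 h2 h0n.
  pose p3 := @mk m n (m-1) 0 h1 h0n.
  exists (fun w => ((w \in [set p1; p2; p3]) : nat)%:R%R); split.
    apply: pattern_id; try (apply: neq1; rewrite /=; apply/eqP; lia).
    exact: decA'.
  apply: (@nvals_ind R _ _ (p1) (@mk m n 1 0 h1m h0n)); first exact: in3.
  by apply: notin3; apply: neq1; rewrite /=; apply/eqP; lia.
have [Em|Em] : m = 2 \/ m = 3 by lia.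
all: have [En|En] : n = 2 \/ n = 3 by lia.
all: subst m n => //.
- exists (fun w => ((w \in [set @mk 2 3 0 0 isT isT; @mk 2 3 0 2 isT isT; @mk 2 3 1 0 isT isT]) : nat)%:R%R); split.
    apply: pattern_id; [by [] | by [] | by [] | exact: dec23].
  apply: (@nvals_ind R _ _ (@mk 2 3 0 0 isT isT) (@mk 2 3 1 1 isT isT)); first exact: in3.
  by apply: notin3; [apply: neq1|apply: neq1|apply: neq2].
- exists (fun w => ((w \in [set @mk 3 2 0 0 isT isT; @mk 3 2 2 0 isT isT; @mk 3 2 0 1 isT isT]) : nat)%:R%R); split.
    apply: pattern_id; [by [] | by [] | by [] | exact: dec32].
  apply: (@nvals_ind R _ _ (@mk 3 2 0 0 isT isT) (@mk 3 2 1 1 isT isT)); first exact: in3.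
  by apply: notin3; apply: neq1.
- exists (fun w => ((w \in [set @mk 3 3 0 0 isT isT; @mk 3 3 0 2 isT isT; @mk 3 3 1 0 isT isT]) : nat)%:R%R); split.
    apply: pattern_id; [by [] | by [] | by [] | exact: dec33].
  apply: (@nvals_ind R _ _ (@mk 3 3 0 0 isT isT) (@mk 3 3 1 1 isT isT)); first exact: in3.
  by apply: notin3; [apply: neq1|apply: neq1|apply: neq2].
Qed.

Theorem mainTheorem8 (R : realType) (m n : nat) (hm : (2 <= m)%N) (hn : (2 <= n)%N) :
  @is_IDI R _ (@grid m n) (if (m == 2) && (n == 2) then 3 else 2).
Proof.
case: ifP => E.
  move/andP: E => [/eqP Em /eqP En]; subst m n.
  split; last by move=> f; exact: lower22.
  exists (fun w => (g22 w)%:R%R : R); split; [exact: upper22_id | exact: upper22_nvals].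
split; last by move=> f; exact: lower2.
apply: upper2 => //; by rewrite E.
Qed.
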